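(* For all $n$ and $m$, top-half approval is a $\frac{1}{3}$-expected-welfare-maximizing rule for every symmetric distribution $\mathcal{D}$ supported on $[0,1]$; that is, for every such $\mathcal{D}$ and every preference profile $\sigma$ on $n$ voters and $m$ alternatives, the alternative $f(\sigma)$ selected by top-half approval satisfies $\mathbb{E}[\mathrm{sw}(f(\sigma),u)]\ge\frac{1}{3}\max_{j\in A}\mathbb{E}[\mathrm{sw}(j,u)]$.
   Context: There are $n$ voters and $m$ alternatives $A=\{1,\dots,m\}$. A preference profile $\sigma$ consists of a ranking of $A$ for each voter. Given a distribution $\mathcal{D}$ and profile $\sigma$, a random utility profile $u$ consistent with $\sigma$ is generated as follows: independently for each voter $i$, draw $m$ i.i.d. samples from $\mathcal{D}$ and assign them, from highest to lowest, to the alternatives in the order of voter $i$'s ranking. The social welfare of $j$ is $\mathrm{sw}(j,u)=\sum_i u_{ij}$; expectations are over $u$. A distribution $\mathcal{D}$ on $[0,1]$ is symmetric if $\Pr_{x\sim\mathcal{D}}(x\le\frac12-\epsilon)=\Pr_{x\sim\mathcal{D}}(x\ge\frac12+\epsilon)$ for all $\epsilon\in[0,\frac12]$. Top-half approval is the scoring rule in which each voter gives $1$ point to each alternative in her top $\lceil m/2\rceil$ positions and $0$ to all others; it selects an alternative with the largest total score (ties broken arbitrarily). *)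

(* Defs.v *)
From HB Require Import structures.
From mathcomp Require Import all_boot all_order all_algebra all_fingroup.
From mathcomp Require Import all_classical all_reals all_analysis.
Set Implicit Arguments. Unset Strict Implicit. Unset Printing Implicit Defensive.
Import Order.TTheory GRing.Theory Num.Theory.
Local Open Scope classical_set_scope.
Local Open Scope ring_scope.

(* A preference profile on n voters and m alternatives (alternatives are 'I_m):
   for voter i, [prof i] is a bijection from alternatives to positions,
   [prof i j] = position of alternative j in voter i's ranking (0 = top). *)
Definition profile (n m : nat) := 'I_n -> {perm 'I_m}.

Definition supported01 (R : realType) (D : probability R R) : Prop :=
  D [set x : R | 0 <= x <= 1] = 1%E.

Definition symmetric_distr (R : realType) (D : probability R R) : Prop :=
  forall eps : R, 0 <= eps <= 2^-1 ->
    D [set x | x <= 2^-1 - eps] = D [set x | 2^-1 + eps <= x].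

(* Expectation of f(x_0, ..., x_{k-1}) where x_0, ..., x_{k-1} are i.i.d.
   samples from D (iterated integral over k independent copies of D). *)
Fixpoint iid_expect (R : realType) (D : probability R R) (k : nat)
    (f : seq R -> \bar R) : \bar R :=
  match k with
  | 0 => f [::]
  | k'.+1 => (\int[D]_x iid_expect D k' (fun s => f (x :: s)))%E
  end.

(* The n*m samples are stored in a sequence s; voter i's m samples are
   s_{i*m}, ..., s_{i*m+m-1}.  They are sorted from highest to lowest and
   assigned to the alternatives in the order of voter i's ranking:
   the utility of j for voter i is the (prof i j)-th largest of her samples. *)
Definition voter_samples (R : realType) (m : nat) (s : seq R) (i : nat) : seq R :=
  [seq nth 0 s (i * m + k) | k <- iota 0 m].

Definition utility (R : realType) (n m : nat) (prof : profile n m)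
    (s : seq R) (i : 'I_n) (j : 'I_m) : R :=
  nth 0 (sort (fun x y : R => y <= x) (voter_samples m s i)) (prof i j).

Definition sw (R : realType) (n m : nat) (prof : profile n m)
    (j : 'I_m) (s : seq R) : R :=
  \sum_(i < n) utility prof s i j.

Definition exp_sw (R : realType) (D : probability R R) (n m : nat)
    (prof : profile n m) (j : 'I_m) : \bar R :=
  iid_expect D (n * m) (fun s => (sw prof j s)%:E).

Definition top_half_score (n m : nat) (prof : profile n m) (j : 'I_m) : nat :=
  #|[set i : 'I_n | (prof i j < uphalf m)%N]|.

(* j is a possible output of top-half approval (ties broken arbitrarily). *)
Definition top_half_winner (n m : nat) (prof : profile n m) (j : 'I_m) : Prop :=
  forall j' : 'I_m, (top_half_score prof j' <= top_half_score prof j)%N.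

(* Main.v *)
Require Import Defs.
From HB Require Import structures.
From mathcomp Require Import all_boot all_order all_algebra all_fingroup.
From mathcomp Require Import all_classical all_reals all_analysis.
From mathcomp Require Import measurable_realfun.
From mathcomp Require Import ring lra zify.
Import Order.TTheory GRing.Theory Num.Theory.
Local Open Scope ring_scope.
Local Open Scope classical_set_scope.
Section Meas.
Context (R : realType) (D : probability R R)
  (hsupp : supported01 D) (hsym : symmetric_distr D).

Definition I01 := [set x : R | 0 <= x <= 1].

Lemma mI01 : measurable I01.
Proof. rewrite /I01 -set_itvcc. exact: measurable_itv. Qed.

Lemma DNI : D (~` I01) = 0%E.
Proof. rewrite probability_setC; last exact: mI01. by rewrite hsupp subee. Qed.

Lemma mray_ge x : measurable [set y : R | x <= y].
Proof. rewrite -set_itvcy. exact: measurable_itv. Qed.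
Lemma mray_le x : measurable [set y : R | y <= x].
Proof. rewrite -set_itvNyc. exact: measurable_itv. Qed.

Lemma sym_ray_ge x : 2^-1 <= x -> D [set y | x <= y] = D [set y | y <= 1 - x].
Proof.
move=> hx.
have [x1|x1] := leP x 1.
  have := hsym (x - 2^-1).
  have -> : 2^-1 - (x - 2^-1) = 1 - x :> R by field.
  have -> : 2^-1 + (x - 2^-1) = x :> R by field.
  move=> ->//. apply/andP; split; first by rewrite subr_ge0.
  rewrite lerBlDr. have -> : 2^-1 + 2^-1 = 1 :> R by field. done.
have mC : measurable (~` I01) by apply: measurableC; exact: mI01.
rewrite (subset_measure0 (mray_ge x) mC _ DNI); last first.
  move=> y /= hy /andP[_ h1]. move: hy h1 x1. lra.
rewrite (subset_measure0 (mray_le (1 - x)) mC _ DNI) //.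
move=> y /= hy /andP[h0 _]. move: hy h0 x1. lra.
Qed.
End Meas.
Arguments I01 {R}.
Section Meas2.
Context (R : realType) (D : probability R R)
  (hsupp : supported01 D) (hsym : symmetric_distr D).

Lemma mray_gt (x : R) : measurable [set y : R | x < y].
Proof. rewrite -set_itvoy. exact: measurable_itv. Qed.
Lemma mray_lt (x : R) : measurable [set y : R | y < x].
Proof. rewrite -set_itvNyo. exact: measurable_itv. Qed.

Lemma mu_bigcup_lim (F : (set R)^nat) :
  (forall i, measurable (F i)) -> nondecreasing_seq F ->
  D (\bigcup_n F n) = lim (D \o F @ \oo).
Proof.
move=> mF ndF; apply/esym/cvg_lim => //.
apply: nondecreasing_cvg_mu => //. exact: bigcupT_measurable.
Qed.

Lemma sym_ray x : D [set y | x <= y] = D [set y | y <= 1 - x].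
Proof.
have [hx|hx] := leP (2^-1) x; first exact: sym_ray_ge.
have -> : [set y | x <= y] = ~` [set y | y < x].
  by apply/seteqP; split => y /= h; [apply/negP; rewrite -leNgt|rewrite leNgt; apply/negP].
have -> : [set y | y <= 1 - x] = ~` [set y | 1 - x < y].
  by apply/seteqP; split => y /= h; [apply/negP; rewrite -leNgt|rewrite leNgt; apply/negP].
rewrite !probability_setC; [|exact: mray_gt|exact: mray_lt].
congr (1 - _)%E.
pose F n := [set y : R | y <= x - n.+1%:R^-1].
pose G n := [set y : R | 1 - x + n.+1%:R^-1 <= y].
have -> : [set y | y < x] = \bigcup_n F n.
  apply/seteqP; split => y /=.
    move=> /ltr_add_invr [k hk]; exists k => //; rewrite /F /=.
    by rewrite lerBrDr ltW.
  move=> [k _]; rewrite /F /= => h; apply: (le_lt_trans h).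
  by rewrite ltrBlDr ltrDl invr_gt0 ltr0n.
have -> : [set y | 1 - x < y] = \bigcup_n G n.
  apply/seteqP; split => y /=.
    move=> h; have /ltr_add_invr [k hk] : 1 - x < y by [].
    by exists k => //; rewrite /G /= ltW.
  move=> [k _]; rewrite /G /= => h; apply: lt_le_trans h.
  by rewrite ltrDl invr_gt0 ltr0n.
have ndF : nondecreasing_seq F.
  move=> a b ab; apply/subsetPset => y; rewrite /F /= => h; apply: (le_trans h).
  rewrite lerD2l lerN2 lef_pV2 ?posrE ?ltr0n // ler_nat; exact: ab.
have ndG : nondecreasing_seq G.
  move=> a b ab; apply/subsetPset => y; rewrite /G /= => h; apply: le_trans h.
  rewrite lerD2l lef_pV2 ?posrE ?ltr0n // ler_nat; exact: ab.
rewrite (@mu_bigcup_lim F (fun i => @mray_le R _) ndF).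
rewrite (@mu_bigcup_lim G (fun i => @mray_ge R _) ndG).
suff -> : D \o F = D \o G by []. apply/funext => n /=.
rewrite /F /G sym_ray_ge //.
  congr (D _); apply/seteqP; split => y /=;
    by have -> : 1 - (1 - x + n.+1%:R^-1) = x - n.+1%:R^-1 by ring.
have : 0 <= n.+1%:R^-1 :> R by rewrite invr_ge0.
move: hx. set t := n.+1%:R^-1. move=> hx ht. clearbody t. lra.
Qed.
End Meas2.
Section Meas3.
Context (R : realType) (D : probability R R)
  (hsupp : supported01 D) (hsym : symmetric_distr D).

Definition refl1 (x : R) := 1 - x.
Lemma mrefl1 : measurable_fun setT refl1.
Proof. rewrite /refl1. exact: measurable_funB. Qed.

Lemma push_eq A : measurable A -> D A = pushforward D refl1 A.
Proof.
move=> mA.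
pose G := @RGenCInfty.G R.
pose g := (fun k : nat => `[-(k%:R), +oo[%classic : set R).
have mG : measurable = <<s G >> by exact: (RGenCInfty.measurableE R).
have setIG : setI_closed G.
  move=> _ _ [a ->] [b ->]. exists (Order.max a b).
  apply/seteqP; split => y /=; rewrite !in_itv /= !andbT.
    by move=> [h1 h2]; rewrite ge_max h1 h2.
  by rewrite ge_max => /andP.
have Gg : forall k, G (g k) by move=> k; exists (-(k%:R)).
have cover : \bigcup_k g k = setT.
  apply/seteqP; split => y // _. exists (Num.truncn `|y|).+1 => //=.
  rewrite /g /= in_itv /= andbT lerNl. apply: le_trans (ler_norm _) _.
  rewrite normrN. exact: ltW (truncnS_gt _).
refine (measure_unique G g mG setIG Gg cover D (pushforward D refl1) _ _ A mA).
- move=> _ [x ->]. rewrite /pushforward /refl1 set_itvcy /=. transitivity (D [set y | y <= 1 - x]); first exact: (@sym_ray R D hsupp hsym x).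
  congr (D _); apply/seteqP; split => y /=; lra.
- move=> k; apply: (@le_lt_trans _ _ 1%E); last exact: ltry.
  apply: probability_le1; exact: measurable_itv.
Unshelve. all: exact: mrefl1.
Qed.
End Meas3.
Arguments refl1 {R}.
Arguments mrefl1 {R}.
Section Int1.
Local Open Scope ereal_scope.
Context {R : realType} (D : probability R R)
  (hsupp : supported01 D) (hsym : symmetric_distr D).

Lemma int_I (f : R -> \bar R) : measurable_fun setT f ->
  \int[D]_x f x = \int[D]_(x in I01) f x.
Proof.
move=> mf.
have mC : measurable (~` (@I01 R)) by apply: measurableC; exact: mI01.
rewrite -(setUv (@I01 R)) integral_setU //; last 3 first.
- exact: mI01.
- by rewrite setUv.
- by rewrite /disj_set setICr.
rewrite (@null_set_integral _ _ _ D (~` I01)) ?adde0 //; last exact: DNI.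
exact: measurable_funS mf.
Qed.

Definition bnd01 (h : R -> R) := exists B : R, forall x, I01 x -> (`|h x| <= B)%R.

Lemma integrable_of (h : R -> R) : measurable_fun setT h -> bnd01 h ->
  D.-integrable setT (EFin \o h).
Proof.
move=> mh [B hB]; apply/integrableP; split; first exact/measurable_EFinP.
have mah : measurable_fun setT (fun x => `|(EFin \o h) x|).
  apply/measurable_EFinP => /=. exact: measurableT_comp.
rewrite int_I //.
apply: (@le_lt_trans _ _ (\int[D]_(x in I01) (cst B%:E) x)); last first.
  rewrite integral_cst; last exact: mI01.
  have hD : (D : measure R R) I01 = 1 := hsupp.
  by rewrite hD mule1 ltry.
apply: ge0_le_integral => //; first exact: mI01.
  exact: measurable_funS mah.
Qed.

Lemma nd_meas (h : R -> R) : nondecreasing_fun h -> measurable_fun setT h.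
Proof. by move=> hnd; apply: nondecreasing_measurable. Qed.

Lemma nd_bnd (h : R -> R) : nondecreasing_fun h -> bnd01 h.
Proof.
move=> hnd; exists (`|h 0%R| + `|h 1%R|)%R => x /andP[x0 x1].
have h0 := hnd _ _ x0; have h1 := hnd _ _ x1.
rewrite ler_norml; apply/andP; split.
  have := ler_norm (h 0%R); have := ler_norm (- h 0%R); rewrite normrN.
  have := normr_ge0 (h 1%R); move: h0; lra.
have := ler_norm (h 1%R); have := normr_ge0 (h 0%R); move: h1; lra.
Qed.

Lemma nd_integrable (h : R -> R) : nondecreasing_fun h ->
  D.-integrable setT (EFin \o h).
Proof. by move=> hnd; apply: integrable_of; [exact: nd_meas|exact: nd_bnd]. Qed.

Lemma refl_integrable (h : R -> R) : nondecreasing_fun h ->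
  D.-integrable setT (EFin \o (h \o refl1)).
Proof.
move=> hnd; apply: integrable_of.
  apply: measurableT_comp; [exact: nd_meas|exact: mrefl1].
have [B hB] := (@nd_bnd h hnd); exists B => x /andP[x0 x1].
apply: hB; rewrite /refl1 /I01 /=; apply/andP; split; lra.
Qed.

Definition Int1 (h : R -> R) : R := fine (\int[D]_x (h x)%:E).

Lemma Int1E (h : R -> R) : D.-integrable setT (EFin \o h) ->
  \int[D]_x (h x)%:E = (Int1 h)%:E.
Proof. by move=> ih; rewrite /Int1 fineK //; exact: integrable_fin_num ih. Qed.

Lemma Int1_le (h1 h2 : R -> R) :
  D.-integrable setT (EFin \o h1) -> D.-integrable setT (EFin \o h2) ->
  (forall x, I01 x -> h1 x <= h2 x)%R -> (Int1 h1 <= Int1 h2)%R.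
Proof.
move=> i1 i2 h12; rewrite -lee_fin -!Int1E //.
rewrite (@int_I (EFin \o h1) (measurable_int _ i1)) (@int_I (EFin \o h2) (measurable_int _ i2)).
apply: le_integral; first exact: mI01.
- apply: integrableS i1 => //; exact: mI01.
- apply: integrableS i2 => //; exact: mI01.
- by move=> x /set_mem Ix /=; rewrite lee_fin h12.
Qed.

Lemma Int1_add (h1 h2 : R -> R) :
  D.-integrable setT (EFin \o h1) -> D.-integrable setT (EFin \o h2) ->
  Int1 (fun x => h1 x + h2 x)%R = (Int1 h1 + Int1 h2)%R.
Proof.
move=> i1 i2; rewrite /Int1.
under eq_integral do rewrite EFinD.
rewrite integralD //. rewrite fineD //; exact: integrable_fin_num.
Qed.

Lemma Int1_cst (c : R) : Int1 (fun _ => c) = c.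
Proof.
rewrite /Int1 (_ : (fun x => c%:E) = cst c%:E) // integral_cst //.
by rewrite (probability_setT D : (D : measure R R) setT = 1) mule1.
Qed.

Lemma Int1_refl (h : R -> R) (c : R) : nondecreasing_fun h ->
  Int1 (fun x => c - h (refl1 x))%R = (c - Int1 h)%R.
Proof.
move=> hnd; rewrite /Int1.
under eq_integral do rewrite EFinB.
rewrite (integralB _ (f1 := cst c%:E) (f2 := EFin \o (h \o refl1))) //; last first.
- exact: refl_integrable.
- apply: (@integrable_of (fun _ => c)); first exact: measurable_cst.
  by exists `|c|%R => x _.
rewrite integral_cst // (probability_setT D : (D : measure R R) setT = 1) mule1.
have -> : \int[D]_x (EFin \o (h \o refl1)) x = \int[D]_x (h x)%:E.
  have := @integral_pushforward _ _ R R R refl1 mrefl1 D setT (EFin \o h).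
  rewrite preimage_setT => <- //.
  - apply: eq_measure_integral => [|mr A mA _]; first exact: mrefl1.
    by have := (@push_eq R D hsupp hsym A mA).
  - apply/measurable_EFinP; exact: nd_meas.
  - exact: refl_integrable.
rewrite fineB //; last exact: (integrable_fin_num _ (@nd_integrable h hnd)).
Qed.
End Int1.
Section Multi.
Context {R : realType} (D : probability R R)
  (hsupp : supported01 D) (hsym : symmetric_distr D).

Definition le_seq (s t : seq R) := forall i, nth 0 s i <= nth 0 t i.
Definition mono k (g : seq R -> R) :=
  forall s t, size s = k -> size t = k -> le_seq s t -> g s <= g t.
Definition Ek k (g : seq R -> R) : R :=
  fine (iid_expect D k (fun s => (g s)%:E)).
Definition in01 (s : seq R) := all (fun x : R => 0 <= x <= 1) s.

Lemma ndi {h : R -> R} : nondecreasing_fun h -> D.-integrable setT (EFin \o h).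
Proof. move=> H; have H1 := nd_integrable D hsupp; exact: (H1 _ H). Qed.

Lemma mono_cons k g x : mono k.+1 g -> mono k (fun s => g (x :: s)).
Proof.
move=> hg s t hs ht hst; apply: hg => /=; [by rewrite hs|by rewrite ht|].
by case.
Qed.

Lemma mono_cons_le k g x y s : mono k.+1 g -> size s = k -> x <= y ->
  g (x :: s) <= g (y :: s).
Proof. by move=> hg hs xy; apply: hg => //=; [rewrite hs|rewrite hs|case]. Qed.

Lemma fin_le k :
  (forall g, mono k g -> iid_expect D k (fun s => (g s)%:E) = (Ek k g)%:E) /\
  (forall g1 g2, mono k g1 -> mono k g2 ->
     (forall s, size s = k -> in01 s -> g1 s <= g2 s) -> Ek k g1 <= Ek k g2).
Proof.
elim: k => [|k [IHf IHl]].
  split; first by move=> g _ /=.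
  by move=> g1 g2 _ _ h; rewrite /Ek /=; apply: h.
have hnd g : mono k.+1 g -> nondecreasing_fun (fun x => Ek k (fun s => g (x :: s))).
  move=> hg x y xy; apply: IHl; [exact: mono_cons|exact: mono_cons|].
  by move=> s hs _; exact: (mono_cons_le _ _ _ _ _ hg hs xy).
have EkS g : mono k.+1 g ->
    iid_expect D k.+1 (fun s => (g s)%:E) =
    (Int1 D (fun x => Ek k (fun s => g (x :: s))))%:E.
  move=> hg /=.
  rewrite -Int1E; last exact: (ndi (hnd g hg)).
  apply: eq_integral => x _. by rewrite IHf //; exact: mono_cons.
split.
  by move=> g hg; rewrite /Ek EkS.
move=> g1 g2 h1 h2 h12; rewrite /Ek !EkS //=.
apply: (Int1_le D hsupp); [exact: (ndi (hnd g1 h1))|exact: (ndi (hnd g2 h2))|].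
move=> x /= Ix; apply: IHl; [exact: mono_cons|exact: mono_cons|].
by move=> s hs hs01; apply: h12 => //=; [rewrite hs|rewrite Ix].
Qed.

Lemma EkS k g : mono k.+1 g ->
  Ek k.+1 g = Int1 D (fun x => Ek k (fun s => g (x :: s))).
Proof.
move=> hg.
have hnd : nondecreasing_fun (fun x => Ek k (fun s => g (x :: s))).
  move=> x y xy; apply: (proj2 (fin_le k)); [exact: mono_cons|exact: mono_cons|].
  by move=> s hs _; exact: (mono_cons_le _ _ _ _ _ hg hs xy).
rewrite {1}/Ek /=.
rewrite (eq_integral (fun x => (Ek k (fun s => g (x :: s)))%:E)); last first.
  move=> x _; rewrite (proj1 (fin_le k)) //; exact: mono_cons.
by rewrite Int1E //; exact: ndi hnd.
Qed.

Lemma Ek_nd k g : mono k.+1 g -> nondecreasing_fun (fun x => Ek k (fun s => g (x :: s))).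
Proof.
move=> hg x y xy; apply: (proj2 (fin_le k)); [exact: mono_cons|exact: mono_cons|].
by move=> s hs _; exact: (mono_cons_le _ _ _ _ _ hg hs xy).
Qed.

Lemma Ek_le k g1 g2 : mono k g1 -> mono k g2 ->
  (forall s, size s = k -> in01 s -> g1 s <= g2 s) -> Ek k g1 <= Ek k g2.
Proof. exact: (proj2 (fin_le k)). Qed.

Lemma Ek_fin k g : mono k g -> iid_expect D k (fun s => (g s)%:E) = (Ek k g)%:E.
Proof. exact: (proj1 (fin_le k)). Qed.

Lemma mono_add k g1 g2 : mono k g1 -> mono k g2 -> mono k (fun s => g1 s + g2 s).
Proof. by move=> h1 h2 s t hs ht hst; apply: lerD; [apply: h1|apply: h2]. Qed.

Lemma mono_cst k c : mono k (fun _ => c).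
Proof. by move=> *. Qed.

Lemma Ek_add k g1 g2 : mono k g1 -> mono k g2 ->
  Ek k (fun s => g1 s + g2 s) = Ek k g1 + Ek k g2.
Proof.
elim: k g1 g2 => [|k IH] g1 g2 h1 h2; first by rewrite /Ek /=.
rewrite !EkS //; last exact: mono_add.
rewrite -Int1_add; [|exact: (ndi (Ek_nd _ _ h1))|exact: (ndi (Ek_nd _ _ h2))].
congr Int1; apply/funext => x; apply: IH; exact: mono_cons.
Qed.

Lemma Ek_cst k c : Ek k (fun _ => c) = c.
Proof.
elim: k => [|k IH]; first by rewrite /Ek /=.
rewrite EkS; last exact: mono_cst.
by rewrite (_ : (fun x => _) = fun _ => c) ?Int1_cst //; apply/funext => x.
Qed.

Lemma mono_refl k c g : mono k g -> mono k (fun s => c - g (map refl1 s)).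
Proof.
move=> hg s t hs ht hst; rewrite lerD2l lerN2; apply: hg; rewrite ?size_map //.
move=> i; have [ik|ik] := ltnP i k.
  rewrite !(nth_map 0) ?hs ?ht // /refl1 lerD2l lerN2; exact: hst.
by rewrite !nth_default ?size_map ?hs ?ht.
Qed.

Lemma Ek_refl k c g : mono k g ->
  Ek k (fun s => c - g (map refl1 s)) = c - Ek k g.
Proof.
elim: k c g => [|k IH] c g hg; first by rewrite /Ek /=.
rewrite !EkS //; last exact: mono_refl.
rewrite -(Int1_refl D hsupp hsym _ c (Ek_nd _ _ hg)).
congr Int1; apply/funext => x /=.
by rewrite -IH //; exact: mono_cons.
Qed.
End Multi.
Section Sort.
Context {R : realType}.
Local Notation geR := (fun x y : R => y <= x).
Local Notation srt u := (sort geR u).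

Lemma geR_trans : transitive geR.
Proof. by move=> x y z /= h1 h2; apply: le_trans h2 h1. Qed.
Lemma geR_refl : reflexive geR.
Proof. by move=> x /=. Qed.
Lemma geR_total : total geR.
Proof. by move=> x y /=; rewrite orbC le_total. Qed.
Lemma geR_anti : antisymmetric geR.
Proof. by move=> x y /andP[h1 h2]; apply/eqP; rewrite eq_le h1 h2. Qed.

Lemma srt_sorted u : sorted geR (srt u).
Proof. exact: (sort_sorted geR_total). Qed.

Lemma size_srt u : size (srt u) = size u.
Proof. by rewrite size_sort. Qed.

Lemma srt_nth_le u p q : (p <= q)%N -> (q < size u)%N ->
  nth 0 (srt u) q <= nth 0 (srt u) p.
Proof.
move=> pq qs.
have := @sorted_leq_nth _ geR geR_trans geR_refl 0 (srt u) (srt_sorted u) p q.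
rewrite !inE size_srt => h; apply: h => //; exact: leq_ltn_trans pq qs.
Qed.

Lemma count_mono (P : pred R) u v :
  (forall x y, x <= y -> P x -> P y) -> size u = size v ->
  (forall i, nth 0 u i <= nth 0 v i) -> (count P u <= count P v)%N.
Proof.
move=> Pm; elim: u v => [|x u IH] [|y v] //= [hs] h.
apply: leq_add; last by apply: IH => // i; exact: (h i.+1).
case Px: (P x) => //=; by rewrite (Pm x y (h 0%N) Px).
Qed.

Lemma srt_mono u v : size u = size v ->
  (forall i, nth 0 u i <= nth 0 v i) ->
  forall p, nth 0 (srt u) p <= nth 0 (srt v) p.
Proof.
move=> huv h p.
have [ps|ps] := ltnP p (size u); last first.
  by rewrite !nth_default ?size_srt -?huv.
set a := nth 0 (srt u) p.
rewrite leNgt; apply/negP => hlt.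
pose P := (fun x : R => a <= x).
have c1 : (p.+1 <= count P (srt u))%N.
  rewrite -(cat_take_drop p.+1 (srt u)) count_cat.
  have -> : count P (take p.+1 (srt u)) = p.+1.
    have /eqP -> : count P (take p.+1 (srt u)) == size (take p.+1 (srt u)).
      rewrite -all_count; apply/(all_nthP 0) => q.
      rewrite size_takel ?size_srt // => qp.
      rewrite nth_take //; apply: srt_nth_le => //.
    by rewrite size_takel ?size_srt.
  exact: leq_addr.
have c2 : (count P (srt v) <= p)%N.
  rewrite -(cat_take_drop p (srt v)) count_cat.
  have -> : count P (drop p (srt v)) = 0%N.
    apply/eqP; rewrite -leqn0 leqNgt -has_count; apply/negP => /(has_nthP 0).
    move=> [q]; rewrite size_drop size_srt -huv => qs.
    rewrite nth_drop /P; apply/negP; rewrite -ltNge.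
    apply: le_lt_trans hlt; apply: srt_nth_le; first exact: leq_addr.
    by rewrite -huv -ltn_subRL.
  rewrite addn0; apply: leq_trans (count_size _ _) _.
  by rewrite size_take; case: ifP => // /negbT; rewrite -leqNgt.
have c3 : count P (srt u) = count P u.
  have hp : perm_eq (srt u) u by rewrite perm_sort.
  by move/seq.permP: hp => ->.
have c4 : count P (srt v) = count P v.
  have hp : perm_eq (srt v) v by rewrite perm_sort.
  by move/seq.permP: hp => ->.
have := count_mono P u v (fun x y xy Px => le_trans Px xy) huv h.
by rewrite -c3 -c4 => c5; move: (leq_trans c1 (leq_trans c5 c2)); rewrite ltnn.
Qed.

Lemma srt_refl u : srt (map refl1 u) = map refl1 (rev (srt u)).
Proof.
apply: (sorted_eq geR_trans geR_anti).
- exact: srt_sorted.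
- rewrite sorted_map (@eq_sorted _ _ (fun x y : R => x <= y)); last first.
    by move=> x y; rewrite /= /refl1 lerD2l lerN2.
  rewrite rev_sorted; exact: srt_sorted.
- rewrite (perm_sort _ (map refl1 u)) perm_sym; apply: perm_map.
  by rewrite perm_rev (perm_sort _ u).
Qed.

Lemma srt_refl_nth u p : (p < size u)%N ->
  nth 0 (srt (map refl1 u)) p = 1 - nth 0 (srt u) (size u - p.+1).
Proof.
move=> ps; rewrite srt_refl (nth_map 0); last by rewrite size_rev size_srt.
by rewrite nth_rev ?size_srt.
Qed.

Lemma srt_in01 u p : all (fun x : R => 0 <= x <= 1) u -> (p < size u)%N ->
  0 <= nth 0 (srt u) p <= 1.
Proof.
move=> /allP hu ps; apply: hu; rewrite -(mem_sort geR).
by apply: mem_nth; rewrite size_srt.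
Qed.
End Sort.
Section Final.
Context {R : realType} (D : probability R R)
  (hsupp : supported01 D) (hsym : symmetric_distr D).

Lemma iid_ext k (f1 f2 : seq R -> \bar R) :
  (forall s, size s = k -> f1 s = f2 s) -> iid_expect D k f1 = iid_expect D k f2.
Proof.
elim: k f1 f2 => [|k IH] f1 f2 h /=; first exact: h.
apply: eq_integral => x _; apply: IH => s hs; apply: h => /=; by rewrite hs.
Qed.

Lemma Ek_ext k g1 g2 : (forall s, size s = k -> g1 s = g2 s) -> Ek D k g1 = Ek D k g2.
Proof. by move=> h; rewrite /Ek (@iid_ext k _ (fun s => (g2 s)%:E)) // => s /h ->. Qed.

Lemma mono_sum k (I : Type) (r : seq I) (F : I -> seq R -> R) :
  (forall i, mono k (F i)) -> mono k (fun s => \sum_(i <- r) F i s).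
Proof.
move=> hF; elim: r => [|a r IH].
  by under eq_fun do rewrite big_nil; exact: mono_cst.
under eq_fun do rewrite big_cons; exact: mono_add.
Qed.

Lemma Ek_sum k (I : Type) (r : seq I) (F : I -> seq R -> R) :
  (forall i, mono k (F i)) ->
  Ek D k (fun s => \sum_(i <- r) F i s) = \sum_(i <- r) Ek D k (F i).
Proof.
move=> hF; elim: r => [|a r IH].
  by under eq_fun do rewrite big_nil; rewrite big_nil Ek_cst.
under eq_fun do rewrite big_cons; rewrite big_cons -IH Ek_add //.
exact: mono_sum.
Qed.

Variables (n m : nat).

Definition ystat (i p : nat) (s : seq R) : R :=
  nth 0 (sort (fun x y : R => y <= x) (voter_samples m s i)) p.

Lemma size_vs (s : seq R) i : size (voter_samples m s i) = m.
Proof. by rewrite /voter_samples size_map size_iota. Qed.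

Lemma nth_vs (s : seq R) i k : (k < m)%N -> nth 0 (voter_samples m s i) k = nth 0 s (i * m + k).
Proof. by move=> km; rewrite /voter_samples (nth_map 0) ?size_iota // nth_iota. Qed.

Lemma mono_y i p : mono (n * m) (ystat i p).
Proof.
move=> s t hs ht hst; apply: srt_mono; first by rewrite !size_vs.
move=> k; have [km|km] := ltnP k m; first by rewrite !nth_vs //.
by rewrite !nth_default ?size_vs.
Qed.

Lemma y_refl i p (s : seq R) : (i < n)%N -> (p < m)%N -> size s = (n * m)%N ->
  ystat i p (map refl1 s) = 1 - ystat i (m - p.+1) s.
Proof.
move=> inn pm hs; rewrite /ystat.
have -> : voter_samples m (map refl1 s) i = map refl1 (voter_samples m s i).
  rewrite /voter_samples -map_comp; apply/eq_in_map => k; rewrite mem_iota => /andP[_ hk].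
  rewrite /= (nth_map 0) // hs.
  have : (i * m + k < i.+1 * m)%N by rewrite mulSn addnC ltn_add2r.
  move/leq_trans; apply; exact: leq_mul.
by rewrite srt_refl_nth size_vs.
Qed.

Lemma y_in01 i p (s : seq R) : (i < n)%N -> (p < m)%N -> size s = (n * m)%N -> in01 s ->
  0 <= ystat i p s <= 1.
Proof.
move=> inn pm hs h01; apply: srt_in01; last by rewrite size_vs.
apply/(all_nthP 0) => k; rewrite size_vs => km; rewrite nth_vs //.
move/(all_nthP 0): h01; apply; rewrite hs.
have : (i * m + k < i.+1 * m)%N by rewrite mulSn addnC ltn_add2r.
move/leq_trans; apply; exact: leq_mul.
Qed.

Lemma y_ord i p q (s : seq R) : (p <= q)%N -> (q < m)%N -> ystat i q s <= ystat i p s.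
Proof. by move=> pq qm; apply: srt_nth_le; rewrite ?size_vs. Qed.

Definition mu i p := Ek D (n * m) (ystat i p).

Lemma mu_refl i p : (i < n)%N -> (p < m)%N -> mu i (m - p.+1) = 1 - mu i p.
Proof.
move=> inn pm; rewrite /mu -Ek_refl //; last exact: mono_y.
apply: Ek_ext => s hs; rewrite y_refl //; ring.
Qed.

Lemma uph_facts : (m <= (uphalf m).*2)%N /\ (uphalf m <= m)%N /\
  (forall p, (p < uphalf m)%N -> (p <= m - p.+1)%N) /\
  (forall p, (uphalf m <= p)%N -> (p < m)%N -> (m - p.+1 <= p)%N).
Proof.
have e1 := uphalf_half m; have e2 := odd_double_half m.
rewrite -muln2 in e2. rewrite -muln2.
move: e1 e2; set o := odd m; set h := m./2; move=> e1 e2.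
split; first lia. split; first lia.
split => p; lia.
Qed.

Lemma mu_01 i p : (i < n)%N -> (p < m)%N -> 0 <= mu i p <= 1.
Proof.
move=> inn pm; apply/andP; split.
  rewrite -{1}(Ek_cst D hsupp (n * m) 0); apply: (Ek_le D hsupp); [exact: mono_cst|exact: mono_y|].
  by move=> s hs h01; have /andP[] := y_in01 i p s inn pm hs h01.
rewrite -(Ek_cst D hsupp (n * m) 1) /mu; apply: (Ek_le D hsupp); [exact: mono_y|exact: mono_cst|].
by move=> s hs h01; have /andP[] := y_in01 i p s inn pm hs h01.
Qed.

Lemma mu_ord i p q : (p <= q)%N -> (q < m)%N -> mu i q <= mu i p.
Proof.
move=> pq qm; apply: (Ek_le D hsupp); [exact: mono_y|exact: mono_y|].
by move=> s _ _; exact: y_ord.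
Qed.

Lemma mu_top i p : (i < n)%N -> (p < uphalf m)%N -> 2^-1 <= mu i p.
Proof.
move=> inn pu; have [_ [um [ht _]]] := uph_facts.
have pm : (p < m)%N by apply: leq_trans pu um.
have hq : (m - p.+1 < m)%N by lia.
have := @mu_ord i p (m - p.+1) (ht _ pu) hq.
rewrite mu_refl // => h; lra.
Qed.

Lemma mu_bot i p : (i < n)%N -> (uphalf m <= p)%N -> (p < m)%N -> mu i p <= 2^-1.
Proof.
move=> inn up pm; have [_ [um [_ hb]]] := uph_facts.
have := @mu_ord i (m - p.+1) p (hb _ up pm) pm.
rewrite mu_refl // => h; lra.
Qed.

Lemma sum_lt h k : (\sum_(j < k) ((j < h)%N : nat) = minn h k)%N.
Proof.
elim: k => [|k IH]; first by rewrite big_ord0 minn0.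
rewrite big_ord_recr /= IH.
case: (ltnP k h) => hk /=; lia.
Qed.

End Final.
Lemma sum_const_ord k c : (\sum_(i < k) c = k * c)%N.
Proof. by rewrite -(big_mkord xpredT (fun _ => c)) sum_nat_const_nat subn0. Qed.

Lemma scoreE (n m : nat) (prof : profile n m) (j : 'I_m) :
  top_half_score prof j = (\sum_(i < n) ((prof i j < uphalf m)%N : nat))%N.
Proof.
rewrite /top_half_score -sum1_card big_mkcond /=; apply: eq_bigr => i _.
case: ifPn => [/set_mem /= -> //|/negP h].
case E: (_ < _)%N => //; exfalso; apply: h; exact: mem_set.
Qed.

Lemma sum_scores (n m : nat) (prof : profile n m) :
  (\sum_(j < m) top_half_score prof j = n * uphalf m)%N.
Proof.
have [_ [um _]] := uph_facts m.
under eq_bigr do rewrite scoreE.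
rewrite exchange_big /=.
rewrite (eq_bigr (fun _ => uphalf m)); last first.
  move=> i _; rewrite [RHS](_ : _ = minn (uphalf m) m); last by rewrite (minn_idPl um).
  by rewrite -sum_lt [RHS](reindex_inj (@perm_inj _ (prof i))).
by rewrite sum_const_ord.
Qed.

Theorem theorem5 (R : realType) (D : probability R R)
  (hsupp : supported01 D) (hsym : symmetric_distr D)
  (n m : nat) (prof : profile n m) (w : 'I_m) :
  top_half_winner prof w ->
  forall j : 'I_m, (((3%:R)^-1)%:E * exp_sw D prof j <= exp_sw D prof w)%E.
Proof.
move=> hw j.
have m0 : (0 < m)%N by apply: leq_ltn_trans (ltn_ord j).
have swE j' : exp_sw D prof j' = (\sum_(i < n) mu D n m i (prof i j'))%:E.
  rewrite /exp_sw.
  have -> : (fun s => (sw prof j' s)%:E) =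
      (fun s => ((fun s => \sum_(i < n) ystat m i (prof i j') s) s)%:E) by [].
  rewrite (Ek_fin D hsupp); last by apply: mono_sum => i; exact: mono_y.
  congr EFin; rewrite (Ek_sum D hsupp) //; move=> i; exact: mono_y.
rewrite !swE -EFinM lee_fin.
have hA j' : \sum_(i < n) (((prof i j' < uphalf m)%N : nat)%:R : R) =
    (top_half_score prof j')%:R.
  by rewrite scoreE natr_sum.
have upper : \sum_(i < n) mu D n m i (prof i j) <=
    n%:R * 2^-1 + 2^-1 * (top_half_score prof j)%:R.
  apply: (@le_trans _ _ (\sum_(i < n) (2^-1 + 2^-1 * (((prof i j < uphalf m)%N : nat)%:R : R)))); last first.
    rewrite big_split /= sumr_const card_ord -mulr_sumr hA -mulr_natl; lra.
  apply: ler_sum => i _.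
  case: ltnP => hp /=.
    have /andP[_ h1] := mu_01 D hsupp _ _ _ _ (ltn_ord i) (ltn_ord (prof i j)).
    apply: le_trans h1 _; lra.
  have := mu_bot D hsupp hsym _ _ _ _ (ltn_ord i) hp (ltn_ord (prof i j)); lra.
have lower : 2^-1 * (top_half_score prof w)%:R <= \sum_(i < n) mu D n m i (prof i w).
  rewrite -hA mulr_sumr; apply: ler_sum => i _.
  case: ltnP => hp /=.
    have := mu_top D hsupp hsym _ _ _ _ (ltn_ord i) hp; lra.
  have /andP[h0 _] := mu_01 D hsupp _ _ _ _ (ltn_ord i) (ltn_ord (prof i w)); lra.
have hnat : (n + top_half_score prof j <= 3 * top_half_score prof w)%N.
  have hjw := hw j.
  have hsum := @sum_scores n m prof.
  have hle : (\sum_(j' < m) top_half_score prof j' <= m * top_half_score prof w)%N.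
    rewrite -sum_const_ord; apply: leq_sum => j' _.
    exact: hw.
  have [hm _] := uph_facts m.
  rewrite -muln2 in hm.
  have : (m * n <= m * (2 * top_half_score prof w))%N.
    apply: (@leq_trans (n * (uphalf m * 2))); first by rewrite mulnC leq_mul2l hm orbT.
    rewrite mulnA -hsum; apply: leq_trans (_ : _ <= m * top_half_score prof w * 2)%N _.
      by rewrite leq_mul2r hle orbT.
    by rewrite mulnCA mulnC.
  rewrite leq_pmul2l // => h2; lia.
have hR : n%:R + (top_half_score prof j)%:R <= 3 * (top_half_score prof w)%:R :> R.
  by rewrite -natrD -natrM ler_nat.
lra.
Qed.
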